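(* Let $\mathbb G_\ell=Z_\ell\otimes I-\mathbb H^\ell$ and $\Phi=(1-\delta)\,\mathbb I_0\otimes I-\mathbb H$. Then the following relations hold in $\mathrm{Hom}_{\mathcal{AB}(\delta)}(1,1)$ for all $\ell\ge 0$: \[ (\mathbb H^{\ell+1})^T-(\mathbb H^\ell)^T\,\Phi-\mathbb G_\ell=0,\qquad (\mathbb H^{\ell+1})^T-\Phi\,(\mathbb H^{\ell})^T-\mathbb G_{\ell}=0 . \] Furthermore, $\mathbb H^k$ and $(\mathbb H^{\ell})^T$ commute for all $k,\ell$.
   Context: $K$ is a commutative ring and $\delta\in K$. $\mathcal{AB}(\delta)$ is the polar (diagrammatic affine) Brauer category: objects are $r\in\mathbb N$, and morphisms $r\to s$ are $K$-linear combinations of polar Brauer diagrams, i.e. Brauer diagrams placed to the right of a vertical thick ''pole'', with horizontal wavy ''connectors'' joining the pole to vertical thin strands; composition is vertical stacking (with the Brauer category relations, a free loop equal to $\delta$). The category admits right tensoring $\otimes$ by ordinary Brauer diagrams (juxtaposition on the right). $\mathbb I_0$ is the pole alone, $I$ is a single thin vertical strand, and $\mathbb H\in\mathrm{Hom}(1,1)$ is the pole with one thin strand joined to it by one connector. The category is subject to the four-term relation $[\mathbb H_{01},\mathbb H_{02}+\mathbb H_{12}]=0$ (where $\mathbb H_{01}=\mathbb H\otimes I$, $\mathbb H_{02}=\mathbb X_0\mathbb H_{01}\mathbb X_0$ with $\mathbb X_0=\mathbb I_0\otimes X$, $X$ the crossing, and $\mathbb H_{12}=\mathbb I_0\otimes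 H$ with $H=X-\cup\circ\cap$) and to skew symmetry $\mathbb H^T=-\mathbb H$. For $\ell\ge0$, $(\mathbb H^\ell)^T\in\mathrm{Hom}(1,1)$ denotes the diagram obtained from $\mathbb H^\ell$ (one thin strand carrying $\ell$ connectors to the pole) by bending the strand so that its upper end runs down (to the right) to the bottom boundary point and its lower end runs up to the top boundary point (the two arcs crossing), the connectors staying attached; in particular $(\mathbb H^0)^T=\mathbb I_0\otimes I$ and skew symmetry reads $(\mathbb H^1)^T=-\mathbb H$. With $\Pi=\mathbb I_0\otimes\cap\in\mathrm{Hom}(2,0)$ and $\amalg=\mathbb I_0\otimes\cup\in\mathrm{Hom}(0,2)$, set $Z_\ell=\Pi(\mathbb H^\ell\otimes I)\amalg\in\mathrm{Hom}_{\mathcal{AB}(\delta)}(0,0)$ (the strand carrying $\ell$ connectors closed into a loop to the right); thus $Z_0=\delta\,\mathbb I_0$ and $\mathbb G_0=(\delta-1)\,\mathbb I_0\otimes I$. *)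

(* Defs.v *)
(* A concrete combinatorial model of the polar Brauer
   category AB(delta) : free K-modules on polar Brauer diagrams, modulo the
   two-sided (composition) ideal, stable under right tensoring by Brauer
   diagrams, generated by isotopy, the four-term relation and skew symmetry. *)
From HB Require Import structures.
From mathcomp Require Import all_boot all_order all_algebra.
From mathcomp Require Import freeg.
From Stdlib Require List.

Set Implicit Arguments.
Unset Strict Implicit.
Unset Printing Implicit Defensive.

Import GRing.Theory.

(* A boundary point: (false, i) = i-th bottom point, (true, j) = j-th top *)
(* point (points counted from the pole, starting at 0).                  *)
Definition endpt := (bool * nat)%type.

(* Connectors met along a strand, in the order of traversal.  A connector *)
(* is recorded as (c, s): c is its rank in the height order along the pole *)
(* (0 = lowest), s is the side of the strand on which it is attached      *)
(* (true = on the left of the direction of traversal).                    *)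
Definition clist := seq (nat * bool).

(* An arc (a, l, b): a strand from boundary point a to boundary point b,   *)
(* carrying the connectors l (read from a to b).                           *)
Definition arc := (endpt * clist * endpt)%type.

(* A diagram: arcs, closed loops carrying at least one connector (read in *)
(* some direction from some starting point), and the number of connectors. *)
Definition diag := (seq arc * seq clist * nat)%type.

Definition d_arcs (d : diag) : seq arc := d.1.1.
Definition d_loops (d : diag) : seq clist := d.1.2.
Definition d_n (d : diag) : nat := d.2.

(* reading a strand backwards reverses the list and flips the sides *)
Definition flipl (l : clist) : clist := rev (map (fun p => (p.1, ~~ p.2)) l).

Definition shiftl (n : nat) (l : clist) : clist := map (fun p => (p.1 + n, p.2)) l.

Definition ends (xs : seq arc) : seq endpt := flatten [seq [:: a.1.1; a.2] | a <- xs].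

Definition wf (r s : nat) (d : diag) : bool :=
  [&& perm_eq (ends (d_arcs d))
        ([seq (false, i) | i <- iota 0 r] ++ [seq (true, k) | k <- iota 0 s]),
      perm_eq (map fst (flatten [seq a.1.2 | a <- d_arcs d] ++ flatten (d_loops d)))
        (iota 0 (d_n d))
    & all (fun l => l != [::]) (d_loops d)].

(* Brauer diagrams r -> s (no connectors, hence no loops) *)
Definition wfB (r s : nat) (d : diag) : bool := wf r s d && (d_n d == 0).

Definition arc_eq (a b : arc) : Prop := b = a \/ b = (a.2, flipl a.1.2, a.1.1).
Definition loop_eq (l m : clist) : Prop :=
  exists k, m = rot k l \/ m = rot k (flipl l).
Definition iso (d d' : diag) : Prop :=
  [/\ d_n d = d_n d',
      exists2 xs, List.Forall2 arc_eq (d_arcs d) xs & perm_eq xs (d_arcs d')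
    & exists2 ys, List.Forall2 loop_eq (d_loops d) ys & perm_eq ys (d_loops d')].

Fixpoint orient (xs : seq arc) (e : endpt) : option (clist * endpt) :=
  match xs with
  | [::] => None
  | a :: xs' =>
      if a.1.1 == e then Some (a.1.2, a.2)
      else if a.2 == e then Some (flipl a.1.2, a.1.1)
      else orient xs' e
  end.

(* Follow a strand through the middle points.  [up] : we are at middle   *)
(* point j going up (into g) or down (into f).  Returns the connectors     *)
(* met, the middle points visited, and Some outer endpoint, or None if we *)
(* came back to middle point j0 going up (closed loop).                   *)
Fixpoint trace (fuel : nat) (fa ga : seq arc) (j0 : nat) (up : bool) (j : nat)
  : option (clist * seq nat * option endpt) :=
  match fuel with
  | 0 => None
  | fuel'.+1 =>
    if up then
      match orient ga (false, j) with
      | Some (l, (true, k)) => Some (l, [:: j], Some (true, k))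
      | Some (l, (false, j')) =>
          match trace fuel' fa ga j0 false j' with
          | Some (l', ms, e) => Some (l ++ l', j :: ms, e)
          | None => None
          end
      | None => None
      end
    else
      match orient fa (true, j) with
      | Some (l, (false, i)) => Some (l, [:: j], Some (false, i))
      | Some (l, (true, j')) =>
          if j' == j0 then Some (l, [:: j], None)
          else match trace fuel' fa ga j0 true j' with
               | Some (l', ms, e) => Some (l ++ l', j :: ms, e)
               | None => None
               end
      | None => None
      end
  end.

Definition ekey (e : endpt) : nat := (e.2).*2 + e.1.

(* returns (number of connector-free closed loops created, diagram) *)
Definition dcomp_raw (g f : diag) : nat * diag :=
  let nf := d_n f in
  let fa := d_arcs f in
  let ga := [seq (a.1.1, shiftl nf a.1.2, a.2) | a <- d_arcs g] in
  let fuel := (size fa + size ga).+1 in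
  let starts := [seq e <- ends fa | ~~ e.1] ++ [seq e <- ends ga | e.1] in
  let path (e : endpt) : option arc :=
    if ~~ e.1 then
      match orient fa e with
      | Some (l, (false, i)) => Some (e, l, (false, i))
      | Some (l, (true, j)) =>
          match trace fuel fa ga j true j with
          | Some (l', _, Some e') => Some (e, l ++ l', e')
          | _ => None
          end
      | None => None
      end
    else
      match orient ga e with
      | Some (l, (true, k)) => Some (e, l, (true, k))
      | Some (l, (false, j)) =>
          match trace fuel fa ga j false j with
          | Some (l', _, Some e') => Some (e, l ++ l', e')
          | _ => None
          end
      | None => None
      end in
  let arcs := [seq a <- pmap path starts | ekey a.1.1 < ekey a.2] in
  let mids := [seq e.2 | e <- ends fa & e.1] in
  let loopat (j : nat) : option clist :=
    match trace fuel fa ga j true j with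
    | Some (l, ms, None) => if all (fun m => j <= m) ms then Some l else None
    | _ => None
    end in
  let newloops := pmap loopat mids in
  (count (fun l => l == [::]) newloops,
   (arcs, d_loops f ++ map (shiftl nf) (d_loops g)
            ++ [seq l <- newloops | l != [::]], nf + d_n g)).

Definition dtens_raw (r s : nat) (d b : diag) : diag :=
  let sh (e : endpt) : endpt := (e.1, (if e.1 then s else r) + e.2) in
  (d_arcs d ++ [seq (sh a.1.1, shiftl (d_n d) a.1.2, sh a.2) | a <- d_arcs b],
   d_loops d ++ map (shiftl (d_n d)) (d_loops b), d_n d + d_n b).

Local Open Scope ring_scope.

Definition mor (K : comNzRingType) := {freeg diag / K}.

Definition bas (K : comNzRingType) (d : diag) : mor K := << d >>.

Definition lift2 (K : comNzRingType) (F : diag -> diag -> mor K) (f g : mor K) : mor K :=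
  \sum_(x <- dom f) \sum_(y <- dom g) (coeff x f * coeff y g) *: F x y.

(* a connector-free closed loop evaluates to delta *)
Definition dcomp (K : comNzRingType) (delta : K) (g f : diag) : mor K :=
  let p := dcomp_raw g f in delta ^+ p.1 *: bas K p.2.

(* mcomp g f = g o f  (f first, i.e. f below g) *)
Definition mcomp (K : comNzRingType) (delta : K) (g f : mor K) : mor K :=
  lift2 (dcomp delta) g f.

Definition mtens (K : comNzRingType) (r s : nat) (f b : mor K) : mor K :=
  lift2 (fun x y => bas K (dtens_raw r s x y)) f b.

Definition id0d : diag := ([::], [::], 0%N).                        (* pole alone, 0 -> 0 *)
Definition idd1 : diag := ([:: ((false, 0%N), [::], (true, 0%N))], [::], 0%N).
Definition Hd : diag := ([:: ((false, 0%N), [:: (0%N, true)], (true, 0%N))], [::], 1%N).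
Definition Xd : diag :=
  ([:: ((false, 0%N), [::], (true, 1%N)); ((false, 1%N), [::], (true, 0%N))], [::], 0%N).
Definition cupd : diag := ([:: ((true, 0%N), [::], (true, 1%N))], [::], 0%N).
Definition capd : diag := ([:: ((false, 0%N), [::], (false, 1%N))], [::], 0%N).


Definition I0 (K : comNzRingType) : mor K := bas K id0d.
Definition polar (K : comNzRingType) (b : diag) : mor K := mtens 0 0 (I0 K) (bas K b).

Definition Im1 (K : comNzRingType) : mor K := polar K idd1.
Definition Hm (K : comNzRingType) : mor K := bas K Hd.

Definition Hbr (K : comNzRingType) (delta : K) : mor K :=
  bas K Xd - mcomp delta (bas K cupd) (bas K capd).

Definition H01 (K : comNzRingType) : mor K := mtens 1 1 (Hm K) (bas K idd1).
Definition X0 (K : comNzRingType) : mor K := polar K Xd.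
Definition H02 (K : comNzRingType) (delta : K) : mor K :=
  mcomp delta (X0 K) (mcomp delta (H01 K) (X0 K)).
Definition H12 (K : comNzRingType) (delta : K) : mor K :=
  mtens 0 0 (I0 K) (Hbr delta).

Definition commut (K : comNzRingType) (delta : K) (f g : mor K) : mor K :=
  mcomp delta f g - mcomp delta g f.

Definition fourT (K : comNzRingType) (delta : K) : mor K :=
  commut delta (H01 K) (H02 delta + H12 delta).

Definition capI (K : comNzRingType) : mor K :=
  mtens 0 0 (I0 K) (mtens 2 0 (bas K capd) (bas K idd1)).
Definition cupI (K : comNzRingType) : mor K :=
  mtens 0 0 (I0 K) (mtens 0 2 (bas K cupd) (bas K idd1)).
Definition transp (K : comNzRingType) (delta : K) (f : mor K) : mor K :=
  mcomp delta (capI K) (mcomp delta (mtens 1 1 f (bas K Xd)) (cupI K)).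

Inductive rel_ideal (K : comNzRingType) (delta : K) : nat -> nat -> mor K -> Prop :=
| RI_iso r s d d' : wf r s d -> wf r s d' -> iso d d' ->
    rel_ideal delta r s (bas K d - bas K d')
| RI_4T : rel_ideal delta 2 2 (fourT delta)
| RI_skew : rel_ideal delta 1 1 (transp delta (Hm K) + Hm K)
| RI_add r s f g : rel_ideal delta r s f -> rel_ideal delta r s g ->
    rel_ideal delta r s (f + g)
| RI_scale r s (a : K) f : rel_ideal delta r s f -> rel_ideal delta r s (a *: f)
| RI_compl r s t f d : rel_ideal delta r s f -> wf s t d ->
    rel_ideal delta r t (mcomp delta (bas K d) f)
| RI_compr q r s f d : rel_ideal delta r s f -> wf q r d ->
    rel_ideal delta q s (mcomp delta f (bas K d))
| RI_tens r s r' s' f b : rel_ideal delta r s f -> wfB r' s' b ->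
    rel_ideal delta (r + r') (s + s') (mtens r s f (bas K b)).

Definition ABeq (K : comNzRingType) (delta : K) (r s : nat) (f g : mor K) : Prop :=
  rel_ideal delta r s (f - g).

Definition Hpow (K : comNzRingType) (delta : K) (l : nat) : mor K :=
  iter l (mcomp delta (Hm K)) (Im1 K).
Definition Pi (K : comNzRingType) : mor K := polar K capd.
Definition Amalg (K : comNzRingType) : mor K := polar K cupd.
Definition Zl (K : comNzRingType) (delta : K) (l : nat) : mor K :=
  mcomp delta (Pi K) (mcomp delta (mtens 1 1 (Hpow delta l) (bas K idd1)) (Amalg K)).
Definition Gl (K : comNzRingType) (delta : K) (l : nat) : mor K :=
  mtens 0 0 (Zl delta l) (bas K idd1) - Hpow delta l.
Definition Phi (K : comNzRingType) (delta : K) : mor K :=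
  (1 - delta) *: Im1 K - Hm K.

(* Main.v *)
Require Import Defs.
From mathcomp Require Import all_boot all_order all_algebra.
From mathcomp Require Import freeg zify ring.
Set Implicit Arguments.
Unset Strict Implicit.
Unset Printing Implicit Defensive.
Import GRing.Theory.
Local Open Scope ring_scope.

Definition Lin (K : comNzRingType) (f : mor K) (G : diag -> mor K) : mor K :=
  \sum_(x <- dom f) coeff x f *: G x.

Lemma LinE (K : comNzRingType) (f : mor K) G (s : seq diag) :
  uniq s -> {subset dom f <= s} -> Lin f G = \sum_(x <- s) coeff x f *: G x.
Proof.
move=> us sub; rewrite /Lin [RHS](bigID (fun x => x \in dom f)) /=.
rewrite [X in _ = _ + X]big1 ?addr0; last first.
  by move=> x /coeff_outdom ->; rewrite scale0r.
rewrite -[RHS]big_filter; apply: perm_big.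
apply: uniq_perm; rewrite ?uniq_dom ?filter_uniq //.
by move=> x; rewrite mem_filter; case xd: (x \in dom f) => //=; rewrite ?sub ?andbF.
Qed.


Lemma LinD (K : comNzRingType) (f g : mor K) G : Lin (f + g) G = Lin f G + Lin g G.
Proof.
set s := undup (dom f ++ dom g ++ dom (f + g)).
have us : uniq s by rewrite undup_uniq.
rewrite (@LinE _ (f + g) G s) // ?(@LinE _ f G s) // ?(@LinE _ g G s) //;
  try by move=> x xd; rewrite mem_undup !mem_cat xd ?orbT.
by rewrite -big_split /=; apply: eq_bigr => x _; rewrite coeffD scalerDl.
Qed.

Lemma LinZ (K : comNzRingType) (a : K) (f : mor K) G : Lin (a *: f) G = a *: Lin f G.
Proof.
rewrite (@LinE _ (a *: f) G (dom f)) ?uniq_dom //; last exact: domZ_subset.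
by rewrite /Lin scaler_sumr; apply: eq_bigr => x _; rewrite coeffZ scalerA.
Qed.

Lemma Lin0 (K : comNzRingType) G : Lin (0 : mor K) G = 0.
Proof. by rewrite /Lin dom0 big_nil. Qed.

Lemma LinN (K : comNzRingType) (f : mor K) G : Lin (- f) G = - Lin f G.
Proof. by rewrite -scaleN1r LinZ scaleN1r. Qed.

Lemma LinB (K : comNzRingType) (f g : mor K) G : Lin (f - g) G = Lin f G - Lin g G.
Proof. by rewrite LinD LinN. Qed.

Lemma Lin_bas (K : comNzRingType) (d : diag) G : Lin (bas K d) G = G d.
Proof. by rewrite /Lin /bas domU1 big_seq1 coeffU eqxx mulr1 scale1r. Qed.

Lemma LinG (K : comNzRingType) (f : mor K) G1 G2 : G1 =1 G2 -> Lin f G1 = Lin f G2.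
Proof. by move=> e; apply: eq_bigr => x _; rewrite e. Qed.

Lemma LinGD (K : comNzRingType) (f : mor K) G1 G2 :
  Lin f (fun x => G1 x + G2 x) = Lin f G1 + Lin f G2.
Proof. by rewrite /Lin -big_split; apply: eq_bigr => x _; rewrite scalerDr. Qed.

Lemma LinGZ (K : comNzRingType) (f : mor K) (a : K) G :
  Lin f (fun x => a *: G x) = a *: Lin f G.
Proof. by rewrite /Lin scaler_sumr; apply: eq_bigr => x _; rewrite !scalerA mulrC. Qed.

Lemma lift2E (K : comNzRingType) F (f g : mor K) :
  lift2 F f g = Lin f (fun x => Lin g (fun y => F x y)).
Proof.
rewrite /lift2 /Lin; apply: eq_bigr => x _; rewrite scaler_sumr.
by apply: eq_bigr => y _; rewrite scalerA.
Qed.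

Lemma lift2Dl (K : comNzRingType) F (f1 f2 g : mor K) :
  lift2 F (f1 + f2) g = lift2 F f1 g + lift2 F f2 g.
Proof. by rewrite !lift2E LinD. Qed.
Lemma lift2Dr (K : comNzRingType) F (f g1 g2 : mor K) :
  lift2 F f (g1 + g2) = lift2 F f g1 + lift2 F f g2.
Proof. by rewrite !lift2E -LinGD; apply: LinG => x; rewrite LinD. Qed.
Lemma lift2Zl (K : comNzRingType) F a (f g : mor K) :
  lift2 F (a *: f) g = a *: lift2 F f g.
Proof. by rewrite !lift2E LinZ. Qed.
Lemma lift2Zr (K : comNzRingType) F a (f g : mor K) :
  lift2 F f (a *: g) = a *: lift2 F f g.
Proof. by rewrite !lift2E -LinGZ; apply: LinG => x; rewrite LinZ. Qed.
Lemma lift2Nl (K : comNzRingType) F (f g : mor K) : lift2 F (- f) g = - lift2 F f g.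
Proof. by rewrite -scaleN1r lift2Zl scaleN1r. Qed.
Lemma lift2Nr (K : comNzRingType) F (f g : mor K) : lift2 F f (- g) = - lift2 F f g.
Proof. by rewrite -scaleN1r lift2Zr scaleN1r. Qed.
Lemma lift2Bl (K : comNzRingType) F (f1 f2 g : mor K) :
  lift2 F (f1 - f2) g = lift2 F f1 g - lift2 F f2 g.
Proof. by rewrite lift2Dl lift2Nl. Qed.
Lemma lift2Br (K : comNzRingType) F (f g1 g2 : mor K) :
  lift2 F f (g1 - g2) = lift2 F f g1 - lift2 F f g2.
Proof. by rewrite lift2Dr lift2Nr. Qed.
Lemma lift2_bas (K : comNzRingType) F x y : lift2 F (bas K x) (bas K y) = F x y.
Proof. by rewrite lift2E !Lin_bas. Qed.

Definition upr a b : clist := [seq (k, true) | k <- iota a b].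
Definition dnr a b : clist := [seq (k, false) | k <- rev (iota a b)].
Definition lp (L : clist) : seq clist := [seq x <- [:: L] | x != [::]].
Lemma flipK x : flipl (flipl x) = x.
Proof.
rewrite /flipl map_rev revK -map_comp.
rewrite (@eq_map _ _ _ id) ?map_id // => -[a b] /=; by rewrite negbK.
Qed.
Lemma flipl_upr a b : flipl (upr a b) = dnr a b.
Proof. by rewrite /flipl /upr /dnr -map_comp -map_rev. Qed.
Lemma flipl_dnr a b : flipl (dnr a b) = upr a b.
Proof. by rewrite -flipl_upr flipK. Qed.
Lemma shiftl_upr n a b : shiftl n (upr a b) = upr (a + n) b.
Proof. elim: b a => //= b IH a; by rewrite IH addSn. Qed.
Lemma shiftl_cat n x y : shiftl n (x ++ y) = shiftl n x ++ shiftl n y.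
Proof. exact: map_cat. Qed.
Lemma shiftl0 x : shiftl 0 x = x.
Proof. by rewrite /shiftl (@eq_map _ _ _ id) ?map_id // => -[a b] /=; rewrite addn0. Qed.
Lemma shiftl_flipl n x : shiftl n (flipl x) = flipl (shiftl n x).
Proof. by rewrite /shiftl /flipl map_rev -!map_comp. Qed.
Lemma shiftl_dnr n a b : shiftl n (dnr a b) = dnr (a + n) b.
Proof. by rewrite -!flipl_upr shiftl_flipl shiftl_upr. Qed.
Lemma upr_rcons a b : upr a b.+1 = upr a b ++ [:: (a + b, true)].
Proof. by rewrite /upr -addn1 iotaD map_cat. Qed.
Lemma dnr_cons a b : dnr a b.+1 = (a + b, false) :: dnr a b.
Proof. by rewrite /dnr -addn1 iotaD rev_cat. Qed.
Lemma dnr_rcons a b : dnr a b.+1 = dnr a.+1 b ++ [:: (a,false)].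
Proof. by rewrite /dnr /= rev_cons map_rcons cats1. Qed.
Lemma fst_upr a b : map fst (upr a b) = iota a b.
Proof. by rewrite /upr -map_comp map_id. Qed.
Lemma fst_dnr a b : map fst (dnr a b) = rev (iota a b).
Proof. by rewrite /dnr -map_comp map_id. Qed.
Lemma flatten_lp L : flatten (lp L) = L.
Proof. by case: L => //= x s; rewrite cats0. Qed.
Lemma all_lp L : all (fun l => l != [::]) (lp L).
Proof. by case: L. Qed.

Definition H01d := dtens_raw 1 1 Hd idd1.
Definition X0d := dtens_raw 0 0 id0d Xd.
Definition H02d := (dcomp_raw X0d (dcomp_raw H01d X0d).2).2.
Definition CCd := dtens_raw 0 0 id0d (dcomp_raw cupd capd).2.
Definition F1 := (dcomp_raw H01d H02d).2.
Definition F2 := (dcomp_raw H01d X0d).2.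
Definition F3 := (dcomp_raw H01d CCd).2.
Definition F4 := (dcomp_raw H02d H01d).2.
Definition F5 := (dcomp_raw X0d H01d).2.
Definition F6 := (dcomp_raw CCd H01d).2.
Definition Dg (cs : clist) (Ls : seq clist) (n : nat) : diag := ([:: ((false,0), cs, (true,0))], Ls, n).
Definition Sd cs n := Dg cs [::] n.
Definition Dbot1 (p : clist) m : diag := ([:: ((false,0),[::],(true,1)); ((true,0), p, (true,2))], [::], m).
Definition Dtop1 (q : clist) i : diag := ([:: ((false,1), q, (false,0)); ((false,2), [::], (true,0))], [::], i).
Definition Dbot2 (p : clist) m : diag := ([:: ((false,0),[::],(true,2)); ((true,0), p, (true,1))], [::], m).
Definition Dtop2 (q : clist) i : diag := ([:: ((false,2), q, (false,0)); ((false,1), [::], (true,0))], [::], i).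
Definition comp3 (Dt M Db : diag) : nat * diag :=
  let a := dcomp_raw M Db in let b := dcomp_raw Dt a.2 in (a.1 + b.1, b.2).
Definition ctxraw F Dt Db := comp3 Dt (dtens_raw 2 2 F idd1) Db.
Definition IId : diag := ([:: ((false,0),[::],(true,0)); ((false,1),[::],(true,1))], [::], 0).
Definition Dbs1 (p : clist) m : diag := ([:: ((false,0),[::],(true,0)); ((true,1), p, (true,2))], [::], m).
Definition Dts1 : diag := ([:: ((false,0),[::],(false,1)); ((false,2),[::],(true,0))], [::], 0).
Definition Dbs2 : diag := ([:: ((false,0), [::], (true,1)); ((true,2), [::], (true,0))], [::], 0).
Definition Dts2 (q : clist) i : diag := ([:: ((false,1), q, (false,2)); ((false,0), [::], (true,0))], [::], i).
Definition ctxsraw F Dt Db := comp3 Dt (dtens_raw 1 1 F IId) Db.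

Ltac crunch := rewrite /ctxraw /ctxsraw /comp3 /dcomp_raw /= ?cats0 ?addn0 ?add0n.

Lemma L1F1 p q m i : ctxraw F1 (Dtop1 q i) (Dbot1 p m) = (0, Sd ((m,true) :: shiftl (m+2) q ++ (m.+1,false) :: p) (m+2+i)).
Proof. crunch. by []. Qed.
Lemma L1F2 p q m i : ctxraw F2 (Dtop1 q i) (Dbot1 p m) = (0, Sd ((m,true) :: flipl (shiftl (m+1) q) ++ p) (m+1+i)).
Proof. crunch. by []. Qed.
Lemma L1F3 p q m i : let L := flipl (shiftl (m+1) q) ++ [:: (m,true)] in
  ctxraw F3 (Dtop1 q i) (Dbot1 p m) = (nat_of_bool (L == [::]), Dg p (lp L) (m+1+i)).
Proof. crunch. by []. Qed.
Lemma L1F4 p q m i : ctxraw F4 (Dtop1 q i) (Dbot1 p m) = (0, Sd ((m.+1,true) :: shiftl (m+2) q ++ (m,false) :: p) (m+2+i)).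
Proof. crunch. by []. Qed.
Lemma L1F5 p q m i : ctxraw F5 (Dtop1 q i) (Dbot1 p m) = (0, Sd (flipl (shiftl (m+1) q) ++ (m,false) :: p) (m+1+i)).
Proof. crunch. by []. Qed.
Lemma L1F6 p q m i : let L := flipl (shiftl (m+1) q) in
  ctxraw F6 (Dtop1 q i) (Dbot1 p m) = (nat_of_bool (L == [::]), Dg ((m,false) :: p) (lp L) (m+1+i)).
Proof. crunch. by []. Qed.

Lemma L2F1 p q m i : ctxraw F1 (Dtop2 q i) (Dbot2 p m) = (0, Sd (shiftl (m+2) q ++ (m.+1,false) :: p ++ [:: (m,true)]) (m+2+i)).
Proof. crunch. by []. Qed.
Lemma L2F2 p q m i : ctxraw F2 (Dtop2 q i) (Dbot2 p m) = (0, Sd (shiftl (m+1) q ++ (m,false) :: flipl p) (m+1+i)).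
Proof. crunch. by []. Qed.
Lemma L2F3 p q m i : ctxraw F3 (Dtop2 q i) (Dbot2 p m) = (nat_of_bool (flipl p == [::]), Dg (shiftl (m+1) q ++ [:: (m,false)]) (lp (flipl p)) (m+1+i)).
Proof. crunch. f_equal; try reflexivity; by case: (_ == _). Qed.
Lemma L2F4 p q m i : ctxraw F4 (Dtop2 q i) (Dbot2 p m) = (0, Sd (shiftl (m+2) q ++ (m,false) :: p ++ [:: (m.+1,true)]) (m+2+i)).
Proof. crunch. by []. Qed.
Lemma L2F5 p q m i : ctxraw F5 (Dtop2 q i) (Dbot2 p m) = (0, Sd (shiftl (m+1) q ++ flipl p ++ [:: (m,true)]) (m+1+i)).
Proof. crunch. by []. Qed.
Lemma L2F6 p q m i : ctxraw F6 (Dtop2 q i) (Dbot2 p m) = (0, Dg (shiftl (m+1) q) [:: (m,true) :: flipl p] (m+1+i)).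
Proof. crunch. by []. Qed.
Lemma LS1 p m s : ctxsraw (Sd [:: (0,s)] 1) Dts1 (Dbs1 p m) = (0, Sd ((m,s) :: p) (m+1)).
Proof. crunch. by []. Qed.
Lemma LS2 q i s : ctxsraw (Sd [:: (0,s)] 1) (Dts2 q i) Dbs2 = (0, Sd (shiftl 1 q ++ [:: (0,s)]) (1+i)).
Proof. crunch. by rewrite negbK. Qed.
Definition capId := dtens_raw 0 0 id0d (dtens_raw 2 0 capd idd1).
Definition cupId := dtens_raw 0 0 id0d (dtens_raw 0 2 cupd idd1).
Lemma Ltr cs n : comp3 capId (dtens_raw 1 1 (Sd cs n) Xd) cupId = (0, Sd (flipl cs) n).
Proof. rewrite /comp3 /dcomp_raw /= ?cats0 ?addn0 ?add0n shiftl0. by []. Qed.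
Definition Pid := dtens_raw 0 0 id0d capd.
Definition Aid := dtens_raw 0 0 id0d cupd.
Lemma LZ cs n : ((comp3 Pid (dtens_raw 1 1 (Sd cs n) idd1) Aid).1, dtens_raw 0 0 (comp3 Pid (dtens_raw 1 1 (Sd cs n) idd1) Aid).2 idd1) = (nat_of_bool (cs == [::]), Dg [::] (lp cs) n).
Proof. rewrite /comp3 /dcomp_raw /dtens_raw /= ?cats0 ?addn0 ?add0n shiftl0 !flipK. f_equal; try reflexivity; by case: (_ == _). Qed.
Lemma Lc cs1 Ls1 n1 cs2 Ls2 n2 : dcomp_raw (Dg cs1 Ls1 n1) (Dg cs2 Ls2 n2) = (0, Dg (cs2 ++ shiftl n2 cs1) (Ls2 ++ map (shiftl n2) Ls1) (n2 + n1)).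
Proof. rewrite /dcomp_raw /= ?cats0. by []. Qed.


Lemma mcomp_bas (K : comNzRingType) (delta : K) g f :
  mcomp delta (bas K g) (bas K f) = delta ^+ (dcomp_raw g f).1 *: bas K (dcomp_raw g f).2.
Proof. by rewrite /mcomp lift2_bas. Qed.
Lemma mtens_bas (K : comNzRingType) r s x y : mtens r s (bas K x) (bas K y) = bas K (dtens_raw r s x y).
Proof. by rewrite /mtens lift2_bas. Qed.
Lemma mcompDl (K : comNzRingType) (delta : K) f1 f2 g : mcomp delta (f1 + f2) g = mcomp delta f1 g + mcomp delta f2 g.
Proof. exact: lift2Dl. Qed.
Lemma mcompDr (K : comNzRingType) (delta : K) f g1 g2 : mcomp delta f (g1 + g2) = mcomp delta f g1 + mcomp delta f g2.
Proof. exact: lift2Dr. Qed.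
Lemma mcompBl (K : comNzRingType) (delta : K) f1 f2 g : mcomp delta (f1 - f2) g = mcomp delta f1 g - mcomp delta f2 g.
Proof. exact: lift2Bl. Qed.
Lemma mcompBr (K : comNzRingType) (delta : K) f g1 g2 : mcomp delta f (g1 - g2) = mcomp delta f g1 - mcomp delta f g2.
Proof. exact: lift2Br. Qed.
Lemma mcompZl (K : comNzRingType) (delta : K) a f g : mcomp delta (a *: f) g = a *: mcomp delta f g.
Proof. exact: lift2Zl. Qed.
Lemma mcompZr (K : comNzRingType) (delta : K) a f g : mcomp delta f (a *: g) = a *: mcomp delta f g.
Proof. exact: lift2Zr. Qed.
Lemma mtensDl (K : comNzRingType) r s (f1 f2 g : mor K) : mtens r s (f1 + f2) g = mtens r s f1 g + mtens r s f2 g.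
Proof. exact: lift2Dl. Qed.
Lemma mtensBl (K : comNzRingType) r s (f1 f2 g : mor K) : mtens r s (f1 - f2) g = mtens r s f1 g - mtens r s f2 g.
Proof. exact: lift2Bl. Qed.
Lemma mtensBr (K : comNzRingType) r s (f g1 g2 : mor K) : mtens r s f (g1 - g2) = mtens r s f g1 - mtens r s f g2.
Proof. exact: lift2Br. Qed.
Lemma mtensZl (K : comNzRingType) r s a (f g : mor K) : mtens r s (a *: f) g = a *: mtens r s f g.
Proof. exact: lift2Zl. Qed.
Lemma mtensZr (K : comNzRingType) r s a (f g : mor K) : mtens r s f (a *: g) = a *: mtens r s f g.
Proof. exact: lift2Zr. Qed.

Lemma scale_pair (K : comNzRingType) (delta : K) (p : nat * diag) k d :
  p = (k, d) -> delta ^+ p.1 *: bas K p.2 = delta ^+ k *: bas K d.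
Proof. by move->. Qed.

Lemma mcomp3 (K : comNzRingType) (delta : K) Dt M Db :
  mcomp delta (bas K Dt) (mcomp delta (bas K M) (bas K Db)) =
  delta ^+ (comp3 Dt M Db).1 *: bas K (comp3 Dt M Db).2.
Proof.
rewrite mcomp_bas mcompZr mcomp_bas scalerA -exprD.
reflexivity.
Qed.

Lemma mcomp_bas0 (K : comNzRingType) (delta : K) g f :
  (dcomp_raw g f).1 = 0%N -> mcomp delta (bas K g) (bas K f) = bas K (dcomp_raw g f).2.
Proof. by move=> e; rewrite mcomp_bas e expr0 scale1r. Qed.

Lemma Im1E (K : comNzRingType) : Im1 K = bas K (Sd [::] 0).
Proof. by rewrite /Im1 /polar /I0 mtens_bas. Qed.
Lemma HmE (K : comNzRingType) : Hm K = bas K (Sd [:: (0%N,true)] 1).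
Proof. by []. Qed.
Lemma mcompSd (K : comNzRingType) (delta : K) cs1 n1 cs2 n2 :
  mcomp delta (bas K (Sd cs1 n1)) (bas K (Sd cs2 n2)) = bas K (Sd (cs2 ++ shiftl n2 cs1) (n2 + n1)).
Proof. by rewrite mcomp_bas /Sd Lc expr0 scale1r. Qed.
Lemma mcompDg (K : comNzRingType) (delta : K) cs1 Ls1 n1 cs2 Ls2 n2 :
  mcomp delta (bas K (Dg cs1 Ls1 n1)) (bas K (Dg cs2 Ls2 n2)) =
  bas K (Dg (cs2 ++ shiftl n2 cs1) (Ls2 ++ map (shiftl n2) Ls1) (n2 + n1)).
Proof. by rewrite mcomp_bas Lc expr0 scale1r. Qed.

Lemma HpowE (K : comNzRingType) (delta : K) l : Hpow delta l = bas K (Sd (upr 0 l) l).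
Proof.
elim: l => [|l IH]; first by rewrite /Hpow /= Im1E.
rewrite /Hpow iterS -/(Hpow delta l) IH HmE mcompSd upr_rcons addn1.
by [].
Qed.

Lemma capIE (K : comNzRingType) : capI K = bas K capId.
Proof. by rewrite /capI !mtens_bas. Qed.
Lemma cupIE (K : comNzRingType) : cupI K = bas K cupId.
Proof. by rewrite /cupI !mtens_bas. Qed.
Lemma transpE (K : comNzRingType) (delta : K) cs n :
  transp delta (bas K (Sd cs n)) = bas K (Sd (flipl cs) n).
Proof. by rewrite /transp capIE cupIE mtens_bas mcomp3 (scale_pair delta (Ltr cs n)) expr0 scale1r. Qed.

Lemma ZIE (K : comNzRingType) (delta : K) l :
  mtens 0 0 (Zl delta l) (bas K idd1) =
  delta ^+ (upr 0 l == [::]) *: bas K (Dg [::] (lp (upr 0 l)) l).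
Proof.
rewrite /Zl /Pi /Amalg /polar /I0 !mtens_bas HpowE mtens_bas.
rewrite (mcomp3 _ Pid) mtensZl mtens_bas.
have e1 : (comp3 Pid (dtens_raw 1 1 (Sd (upr 0 l) l) idd1) Aid).1 = nat_of_bool (upr 0 l == [::]).
  exact: (congr1 fst (LZ (upr 0 l) l)).
have e2 : dtens_raw 0 0 (comp3 Pid (dtens_raw 1 1 (Sd (upr 0 l) l) idd1) Aid).2 idd1 = Dg [::] (lp (upr 0 l)) l.
  exact: (congr1 snd (LZ (upr 0 l) l)).
by rewrite e1 e2.
Qed.

Lemma I_opp (K : comNzRingType) (delta : K) r s f : rel_ideal delta r s f -> rel_ideal delta r s (- f).
Proof. by move=> h; rewrite -scaleN1r; apply: RI_scale. Qed.
Lemma I_sub (K : comNzRingType) (delta : K) r s f g :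
  rel_ideal delta r s f -> rel_ideal delta r s g -> rel_ideal delta r s (f - g).
Proof. by move=> hf hg; apply: RI_add => //; apply: I_opp. Qed.

Lemma Forall2_refl (A : Type) (P : A -> A -> Prop) (l : seq A) : (forall x, P x x) -> List.Forall2 P l l.
Proof. by move=> h; elim: l => [|x l IH]; constructor. Qed.
Lemma iso_refl d : iso d d.
Proof.
split => //.
  by exists (d_arcs d); [apply: Forall2_refl => x; left | apply: perm_refl].
by exists (d_loops d); [apply: Forall2_refl => x; exists 0%N; left; rewrite rot0 | apply: perm_refl].
Qed.

Lemma wfP r s d :
  perm_eq (ends (d_arcs d)) ([seq (false, i) | i <- iota 0 r] ++ [seq (true, k) | k <- iota 0 s]) ->
  perm_eq (map fst (flatten [seq a.1.2 | a <- d_arcs d] ++ flatten (d_loops d))) (iota 0 (d_n d)) ->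
  all (fun l => l != [::]) (d_loops d) -> wf r s d.
Proof. by move=> h1 h2 h3; apply/and3P. Qed.

Lemma wf_Dg cs Ls n : perm_eq (map fst (cs ++ flatten Ls)) (iota 0 n) ->
  all (fun l => l != [::]) Ls -> wf 1 1 (Dg cs Ls n).
Proof. by move=> h1 h2; apply: wfP => //=; rewrite cats0. Qed.

Lemma wf_Sd_upr k : wf 1 1 (Sd (upr 0 k) k).
Proof. by apply: wf_Dg => //; rewrite cats0 fst_upr. Qed.
Lemma wf_Hd : wf 1 1 Hd.
Proof. by []. Qed.
Lemma wf_Sd0 : wf 1 1 (Sd [::] 0).
Proof. by []. Qed.

Lemma I_zero (K : comNzRingType) (delta : K) : rel_ideal delta 1 1 0.
Proof. by rewrite -(subrr (bas K (Sd [::] 0))); apply: RI_iso => //; apply: iso_refl. Qed.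

Lemma perm_dnr_upr m j : perm_eq (rev (iota 0 m) ++ iota m j) (iota 0 (m + j)).
Proof. by rewrite iotaD add0n perm_cat2r perm_rev. Qed.

Lemma lp_ne L : L != [::] -> lp L = [:: L].
Proof. by case: L. Qed.
Lemma I_rot (K : comNzRingType) (delta : K) cs L n k :
  perm_eq (map fst (cs ++ L)) (iota 0 n) ->
  rel_ideal delta 1 1 (delta ^+ (rot k L == [::]) *: bas K (Dg cs (lp (rot k L)) n)
                       - delta ^+ (L == [::]) *: bas K (Dg cs (lp L) n)).
Proof.
move=> hp.
have e : (rot k L == [::]) = (L == [::]) by rewrite -!size_eq0 size_rot.
rewrite e -scalerBr; apply: RI_scale; apply: RI_iso.
- apply: wf_Dg; rewrite ?all_lp // flatten_lp.
  by apply: perm_trans hp; apply: perm_map; rewrite perm_cat2l perm_rot.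
- by apply: wf_Dg; rewrite ?all_lp // flatten_lp.
- split => //; first by exists (d_arcs (Dg cs (lp (rot k L)) n)) => //; apply: Forall2_refl => x; left.
  exists (lp L); last by apply: perm_refl.
  case: L {hp e} => [|x L]; first by rewrite /=; constructor.
  have ne : rot k (x :: L) != [::] by rewrite -size_eq0 size_rot.
  rewrite (lp_ne ne); constructor => //.
  by exists (size (rot k (x :: L)) - k)%N; left; symmetry; exact: (rotK k (x :: L)).
Qed.

Lemma H01E (K : comNzRingType) : H01 K = bas K H01d.
Proof. by rewrite /H01 mtens_bas. Qed.
Lemma X0E (K : comNzRingType) : X0 K = bas K X0d.
Proof. by rewrite /X0 /polar /I0 mtens_bas. Qed.
Lemma H02E (K : comNzRingType) (delta : K) : H02 delta = bas K H02d.
Proof.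
rewrite /H02 X0E H01E mcomp3.
have e : (comp3 X0d H01d X0d).1 = 0%N by vm_compute.
by rewrite e expr0 scale1r.
Qed.
Lemma H12E (K : comNzRingType) (delta : K) : H12 delta = bas K X0d - bas K CCd.
Proof.
rewrite /H12 /Hbr mcomp_bas0; last by vm_compute.
by rewrite mtensBr /I0 !mtens_bas.
Qed.
Lemma fourTE (K : comNzRingType) (delta : K) :
  fourT delta = (bas K F1 + (bas K F2 - bas K F3)) - (bas K F4 + (bas K F5 - bas K F6)).
Proof.
rewrite /fourT /commut H02E H12E H01E mcompDr mcompBr mcompDl mcompBl.
rewrite !mcomp_bas0 //; by vm_compute.
Qed.

Opaque F1 F2 F3 F4 F5 F6.
Definition Ctx1 (K : comNzRingType) (delta : K) (f : mor K) m i : mor K :=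
  mcomp delta (bas K (Dtop1 (dnr 0 i) i))
    (mcomp delta (mtens 2 2 f (bas K idd1)) (bas K (Dbot1 (dnr 0 m) m))).
Definition Ctx2 (K : comNzRingType) (delta : K) (f : mor K) m i : mor K :=
  mcomp delta (bas K (Dtop2 (dnr 0 i) i))
    (mcomp delta (mtens 2 2 f (bas K idd1)) (bas K (Dbot2 (dnr 0 m) m))).

Lemma wf_top1 i : wf 3 1 (Dtop1 (dnr 0 i) i).
Proof. by apply: wfP => //=; rewrite !cats0 fst_dnr perm_rev. Qed.
Lemma wf_bot1 m : wf 1 3 (Dbot1 (dnr 0 m) m).
Proof. by apply: wfP => //=; rewrite !cats0 fst_dnr perm_rev. Qed.
Lemma wf_top2 i : wf 3 1 (Dtop2 (dnr 0 i) i).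
Proof. by apply: wfP => //=; rewrite !cats0 fst_dnr perm_rev. Qed.
Lemma wf_bot2 m : wf 1 3 (Dbot2 (dnr 0 m) m).
Proof. by apply: wfP => //=; rewrite !cats0 fst_dnr perm_rev. Qed.
Lemma wfB_idd1 : wfB 1 1 idd1.
Proof. by []. Qed.
Lemma wfB_IId : wfB 2 2 IId.
Proof. by []. Qed.

Lemma I_ctx1 (K : comNzRingType) (delta : K) f m i :
  rel_ideal delta 2 2 f -> rel_ideal delta 1 1 (Ctx1 delta f m i).
Proof.
move=> h; apply: RI_compl (wf_top1 i); apply: RI_compr (wf_bot1 m).
exact: (RI_tens h wfB_idd1).
Qed.
Lemma I_ctx2 (K : comNzRingType) (delta : K) f m i :
  rel_ideal delta 2 2 f -> rel_ideal delta 1 1 (Ctx2 delta f m i).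
Proof.
move=> h; apply: RI_compl (wf_top2 i); apply: RI_compr (wf_bot2 m).
exact: (RI_tens h wfB_idd1).
Qed.

Lemma Ctx1D (K : comNzRingType) (delta : K) (f g : mor K) m i :
  Ctx1 delta (f + g) m i = Ctx1 delta f m i + Ctx1 delta g m i.
Proof. by rewrite /Ctx1 mtensDl mcompDl mcompDr. Qed.
Lemma Ctx1B (K : comNzRingType) (delta : K) (f g : mor K) m i :
  Ctx1 delta (f - g) m i = Ctx1 delta f m i - Ctx1 delta g m i.
Proof. by rewrite /Ctx1 mtensBl mcompBl mcompBr. Qed.
Lemma Ctx1bas (K : comNzRingType) (delta : K) F m i :
  Ctx1 delta (bas K F) m i = delta ^+ (ctxraw F (Dtop1 (dnr 0 i) i) (Dbot1 (dnr 0 m) m)).1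
     *: bas K (ctxraw F (Dtop1 (dnr 0 i) i) (Dbot1 (dnr 0 m) m)).2.
Proof. by rewrite /Ctx1 mtens_bas mcomp3. Qed.
Lemma Ctx2D (K : comNzRingType) (delta : K) (f g : mor K) m i :
  Ctx2 delta (f + g) m i = Ctx2 delta f m i + Ctx2 delta g m i.
Proof. by rewrite /Ctx2 mtensDl mcompDl mcompDr. Qed.
Lemma Ctx2B (K : comNzRingType) (delta : K) (f g : mor K) m i :
  Ctx2 delta (f - g) m i = Ctx2 delta f m i - Ctx2 delta g m i.
Proof. by rewrite /Ctx2 mtensBl mcompBl mcompBr. Qed.
Lemma Ctx2bas (K : comNzRingType) (delta : K) F m i :
  Ctx2 delta (bas K F) m i = delta ^+ (ctxraw F (Dtop2 (dnr 0 i) i) (Dbot2 (dnr 0 m) m)).1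
     *: bas K (ctxraw F (Dtop2 (dnr 0 i) i) (Dbot2 (dnr 0 m) m)).2.
Proof. by rewrite /Ctx2 mtens_bas mcomp3. Qed.


Opaque F1 F2 F3 F4 F5 F6 bas.
Lemma I_eq (K : comNzRingType) (delta : K) r s f g :
  rel_ideal delta r s f -> f = g -> rel_ideal delta r s g.
Proof. by move=> h <-. Qed.

Ltac zsolve := apply/eqP/freeg_eqP => ?; rewrite ?(coeffD, coeffN, coeffZ); ring.

Definition W1 m j := Sd ((m,true) :: dnr m.+1 j ++ dnr 0 m) (m + j).+1.
Definition V1 m j := Sd (upr m j ++ dnr 0 m) (m + j).
Definition U1 (K : comNzRingType) (delta : K) m j :=
  delta ^+ (upr m j == [::]) *: bas K (Dg (dnr 0 m) (lp (upr m j)) (m + j)).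
Definition U1r (K : comNzRingType) (delta : K) m j :=
  delta ^+ (rot 1 (upr m j) == [::]) *: bas K (Dg (dnr 0 m) (lp (rot 1 (upr m j))) (m + j)).
Definition A1 (K : comNzRingType) (delta : K) m j :=
  bas K (W1 m j) + bas K (V1 m j) - U1 delta m j.

Lemma upr_cons a b : upr a b.+1 = (a, true) :: upr a.+1 b.
Proof. by []. Qed.

Lemma C1F1 (K : comNzRingType) (delta : K) m i : Ctx1 delta (bas K F1) m i = bas K (W1 m i.+1).
Proof.
rewrite Ctx1bas (scale_pair delta (L1F1 _ _ _ _)) expr0 scale1r /W1.
rewrite shiftl_dnr add0n addn2 dnr_rcons -catA /=.
by congr (bas K (Sd _ _)); lia.
Qed.
Lemma C1F2 (K : comNzRingType) (delta : K) m i : Ctx1 delta (bas K F2) m i = bas K (V1 m i.+1).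
Proof.
rewrite Ctx1bas (scale_pair delta (L1F2 _ _ _ _)) expr0 scale1r /V1.
rewrite shiftl_dnr add0n flipl_dnr addn1 upr_cons.
by congr (bas K (Sd _ _)); lia.
Qed.
Lemma C1F3 (K : comNzRingType) (delta : K) m i : Ctx1 delta (bas K F3) m i = U1r delta m i.+1.
Proof.
rewrite Ctx1bas (scale_pair delta (L1F3 _ _ _ _)) /U1r.
rewrite shiftl_dnr add0n flipl_dnr addn1 upr_cons rot1_cons cats1.
by congr (_ *: bas K (Dg _ _ _)); lia.
Qed.
Lemma C1F4 (K : comNzRingType) (delta : K) m i : Ctx1 delta (bas K F4) m i = bas K (W1 m.+1 i).
Proof.
rewrite Ctx1bas (scale_pair delta (L1F4 _ _ _ _)) expr0 scale1r /W1.
rewrite shiftl_dnr add0n addn2 dnr_cons ?add0n.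
by congr (bas K (Sd _ _)); lia.
Qed.
Lemma C1F5 (K : comNzRingType) (delta : K) m i : Ctx1 delta (bas K F5) m i = bas K (V1 m.+1 i).
Proof.
rewrite Ctx1bas (scale_pair delta (L1F5 _ _ _ _)) expr0 scale1r /V1.
rewrite shiftl_dnr add0n flipl_dnr addn1 dnr_cons ?add0n.
by congr (bas K (Sd _ _)); lia.
Qed.
Lemma C1F6 (K : comNzRingType) (delta : K) m i : Ctx1 delta (bas K F6) m i = U1 delta m.+1 i.
Proof.
rewrite Ctx1bas (scale_pair delta (L1F6 _ _ _ _)) /U1.
rewrite shiftl_dnr add0n flipl_dnr addn1 dnr_cons ?add0n.
by [].
Qed.

Lemma step1_gen (K : comNzRingType) (delta : K) m i (f1 f2 f3 f4 f5 f6 : mor K) :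
  rel_ideal delta 1 1 (Ctx1 delta ((f1 + (f2 - f3)) - (f4 + (f5 - f6))) m i) ->
  Ctx1 delta f1 m i = bas K (W1 m i.+1) -> Ctx1 delta f2 m i = bas K (V1 m i.+1) ->
  Ctx1 delta f3 m i = U1r delta m i.+1 ->
  Ctx1 delta f4 m i = bas K (W1 m.+1 i) -> Ctx1 delta f5 m i = bas K (V1 m.+1 i) ->
  Ctx1 delta f6 m i = U1 delta m.+1 i ->
  rel_ideal delta 1 1 (A1 delta m i.+1 - A1 delta m.+1 i).
Proof.
move=> h e1 e2 e3 e4 e5 e6.
rewrite (Ctx1B delta (f1 + _)) (Ctx1D delta f1) (Ctx1B delta f2) (Ctx1D delta f4) (Ctx1B delta f5) in h.
rewrite e1 e2 e3 e4 e5 e6 in h.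
have h2 : rel_ideal delta 1 1 (U1r delta m i.+1 - U1 delta m i.+1).
  apply: I_rot; rewrite map_cat fst_dnr fst_upr; exact: perm_dnr_upr.
apply: (I_eq (RI_add h h2)); rewrite /A1 /U1 /U1r; zsolve.
Qed.

Lemma step1 (K : comNzRingType) (delta : K) m i :
  rel_ideal delta 1 1 (A1 delta m i.+1 - A1 delta m.+1 i).
Proof.
have h := I_ctx1 m i (RI_4T delta).
rewrite fourTE in h.
exact: (step1_gen h (C1F1 delta m i) (C1F2 delta m i) (C1F3 delta m i) (C1F4 delta m i) (C1F5 delta m i) (C1F6 delta m i)).
Qed.

Lemma tele (K : comNzRingType) (delta : K) (A : nat -> nat -> mor K) l :
  (forall m i, rel_ideal delta 1 1 (A m i.+1 - A m.+1 i)) ->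
  rel_ideal delta 1 1 (A 0%N l - A l 0%N).
Proof.
move=> st.
suff h : forall k, (k <= l)%N -> rel_ideal delta 1 1 (A 0%N l - A k (l - k)%N).
  by have := h l (leqnn l); rewrite subnn.
elim => [|k IH] hk; first by rewrite subn0 subrr; apply: I_zero.
have e : (l - k = (l - k.+1).+1)%N by rewrite subnSK.
have := RI_add (IH (ltnW hk)) (st k (l - k.+1)%N).
by rewrite -e addrA subrK.
Qed.

Lemma dnr0 a : dnr a 0 = [::]. Proof. by []. Qed.
Lemma upr0 a : upr a 0 = [::]. Proof. by []. Qed.

Lemma A1_0 (K : comNzRingType) (delta : K) l :
  A1 delta 0 l = bas K (Sd ((0%N,true) :: dnr 1 l) l.+1) + bas K (Sd (upr 0 l) l)
     - delta ^+ (upr 0 l == [::]) *: bas K (Dg [::] (lp (upr 0 l)) l).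
Proof. by rewrite /A1 /W1 /V1 /U1 !dnr0 !cats0. Qed.
Lemma A1_l (K : comNzRingType) (delta : K) l :
  A1 delta l 0 = bas K (Sd ((l,true) :: dnr 0 l) l.+1) + bas K (Sd (dnr 0 l) l)
     - delta *: bas K (Sd (dnr 0 l) l).
Proof. by rewrite /A1 /W1 /V1 /U1 !dnr0 !upr0 !addn0 eqxx expr1. Qed.

Definition Ctxs1 (K : comNzRingType) (delta : K) (f : mor K) l : mor K :=
  mcomp delta (bas K Dts1) (mcomp delta (mtens 1 1 f (bas K IId)) (bas K (Dbs1 (dnr 0 l) l))).
Lemma wf_ts1 : wf 3 1 Dts1. Proof. by []. Qed.
Lemma wf_bs1 l : wf 1 3 (Dbs1 (dnr 0 l) l).
Proof. by apply: wfP => //=; rewrite !cats0 fst_dnr perm_rev. Qed.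
Lemma I_ctxs1 (K : comNzRingType) (delta : K) f l :
  rel_ideal delta 1 1 f -> rel_ideal delta 1 1 (Ctxs1 delta f l).
Proof.
move=> h; apply: RI_compl wf_ts1; apply: RI_compr (wf_bs1 l).
exact: (RI_tens h wfB_IId).
Qed.
Lemma skewE (K : comNzRingType) (delta : K) :
  transp delta (Hm K) + Hm K = bas K (Sd [:: (0%N,false)] 1) + bas K (Sd [:: (0%N,true)] 1).
Proof. by rewrite HmE transpE. Qed.
Lemma Ctxs1E (K : comNzRingType) (delta : K) s l :
  Ctxs1 delta (bas K (Sd [:: (0%N,s)] 1)) l = bas K (Sd ((l,s) :: dnr 0 l) l.+1).
Proof. by rewrite /Ctxs1 mtens_bas mcomp3 (scale_pair delta (LS1 _ _ _)) expr0 scale1r addn1. Qed.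
Lemma Hs1 (K : comNzRingType) (delta : K) l :
  rel_ideal delta 1 1 (bas K (Sd ((l,false) :: dnr 0 l) l.+1) + bas K (Sd ((l,true) :: dnr 0 l) l.+1)).
Proof.
have h := I_ctxs1 l (RI_skew delta).
by rewrite skewE /Ctxs1 mtensDl mcompDl mcompDr -!/(Ctxs1 _ _ _) !Ctxs1E in h.
Qed.

Lemma rel1 (K : comNzRingType) (delta : K) l :
  ABeq delta 1 1 (transp delta (Hpow delta l.+1) - mcomp delta (transp delta (Hpow delta l)) (Phi delta)
          - Gl delta l) 0.
Proof.
rewrite /ABeq subr0 /Gl /Phi !HpowE !transpE ZIE mcompBr mcompZr Im1E HmE !mcompSd.
rewrite !flipl_upr shiftl0 shiftl_dnr dnr_cons cat0s cat1s !add0n add1n.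
have ht := tele l (step1 delta).
apply: (I_eq (RI_add (Hs1 delta l) ht)).
rewrite A1_0 A1_l; zsolve.
Qed.

Definition W2 m j := Sd (dnr m.+1 j ++ dnr 0 m ++ [:: (m,true)]) (m + j).+1.
Definition V2 m j := Sd (dnr m j ++ upr 0 m) (m + j).
Definition U2 (K : comNzRingType) (delta : K) m j :=
  delta ^+ (upr 0 m == [::]) *: bas K (Dg (dnr m j) (lp (upr 0 m)) (m + j)).
Definition U2r (K : comNzRingType) (delta : K) m j :=
  delta ^+ (rot m (upr 0 m.+1) == [::]) *: bas K (Dg (dnr m.+1 j) (lp (rot m (upr 0 m.+1))) (m.+1 + j)).
Definition A2 (K : comNzRingType) (delta : K) m j :=
  bas K (W2 m j) + bas K (V2 m j) - U2 delta m j.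

Lemma C2F1 (K : comNzRingType) (delta : K) m i : Ctx2 delta (bas K F1) m i = bas K (W2 m i.+1).
Proof.
rewrite Ctx2bas (scale_pair delta (L2F1 _ _ _ _)) expr0 scale1r /W2.
rewrite shiftl_dnr add0n addn2 dnr_rcons -catA cat1s.
by congr (bas K (Sd _ _)); lia.
Qed.
Lemma C2F2 (K : comNzRingType) (delta : K) m i : Ctx2 delta (bas K F2) m i = bas K (V2 m i.+1).
Proof.
rewrite Ctx2bas (scale_pair delta (L2F2 _ _ _ _)) expr0 scale1r /V2.
rewrite shiftl_dnr add0n flipl_dnr addn1 dnr_rcons -catA cat1s.
by congr (bas K (Sd _ _)); lia.
Qed.
Lemma C2F3 (K : comNzRingType) (delta : K) m i : Ctx2 delta (bas K F3) m i = U2 delta m i.+1.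
Proof.
rewrite Ctx2bas (scale_pair delta (L2F3 _ _ _ _)) /U2.
rewrite shiftl_dnr add0n flipl_dnr addn1 -dnr_rcons.
by congr (_ *: bas K (Dg _ _ _)); lia.
Qed.
Lemma C2F4 (K : comNzRingType) (delta : K) m i : Ctx2 delta (bas K F4) m i = bas K (W2 m.+1 i).
Proof.
rewrite Ctx2bas (scale_pair delta (L2F4 _ _ _ _)) expr0 scale1r /W2.
rewrite shiftl_dnr add0n addn2 dnr_cons ?add0n.
by congr (bas K (Sd _ _)); lia.
Qed.
Lemma C2F5 (K : comNzRingType) (delta : K) m i : Ctx2 delta (bas K F5) m i = bas K (V2 m.+1 i).
Proof.
rewrite Ctx2bas (scale_pair delta (L2F5 _ _ _ _)) expr0 scale1r /V2.
rewrite shiftl_dnr add0n flipl_dnr addn1 upr_rcons ?add0n.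
by congr (bas K (Sd _ _)); lia.
Qed.
Lemma rot_upr m : rot m (upr 0 m.+1) = (m, true) :: upr 0 m.
Proof.
have s : size (upr 0 m) = m by rewrite size_map size_iota.
have e := rot_size_cat (upr 0 m) [:: (0 + m, true)]%N.
by rewrite s in e; rewrite upr_rcons e.
Qed.
Lemma C2F6 (K : comNzRingType) (delta : K) m i : Ctx2 delta (bas K F6) m i = U2r delta m i.
Proof.
rewrite Ctx2bas (scale_pair delta (L2F6 _ _ _ _)) /U2r rot_upr.
rewrite shiftl_dnr add0n flipl_dnr addn1.
by congr (_ *: bas K (Dg _ _ _)); lia.
Qed.

Lemma perm_dnr_upr2 m j : perm_eq (rev (iota m j) ++ iota 0 m) (iota 0 (m + j)).
Proof. by rewrite iotaD add0n perm_catC perm_cat2l perm_rev. Qed.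

Lemma step2_gen (K : comNzRingType) (delta : K) m i (f1 f2 f3 f4 f5 f6 : mor K) :
  rel_ideal delta 1 1 (Ctx2 delta ((f1 + (f2 - f3)) - (f4 + (f5 - f6))) m i) ->
  Ctx2 delta f1 m i = bas K (W2 m i.+1) -> Ctx2 delta f2 m i = bas K (V2 m i.+1) ->
  Ctx2 delta f3 m i = U2 delta m i.+1 ->
  Ctx2 delta f4 m i = bas K (W2 m.+1 i) -> Ctx2 delta f5 m i = bas K (V2 m.+1 i) ->
  Ctx2 delta f6 m i = U2r delta m i ->
  rel_ideal delta 1 1 (A2 delta m i.+1 - A2 delta m.+1 i).
Proof.
move=> h e1 e2 e3 e4 e5 e6.
rewrite (Ctx2B delta (f1 + _)) (Ctx2D delta f1) (Ctx2B delta f2) (Ctx2D delta f4) (Ctx2B delta f5) in h.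
rewrite e1 e2 e3 e4 e5 e6 in h.
have h2 : rel_ideal delta 1 1 (U2r delta m i - U2 delta m.+1 i).
  apply: I_rot; rewrite map_cat fst_dnr fst_upr; exact: perm_dnr_upr2.
apply: (I_eq (I_sub h h2)); rewrite /A2 /U2 /U2r; zsolve.
Qed.

Lemma step2 (K : comNzRingType) (delta : K) m i :
  rel_ideal delta 1 1 (A2 delta m i.+1 - A2 delta m.+1 i).
Proof.
have h := I_ctx2 m i (RI_4T delta).
rewrite fourTE in h.
exact: (step2_gen h (C2F1 delta m i) (C2F2 delta m i) (C2F3 delta m i) (C2F4 delta m i) (C2F5 delta m i) (C2F6 delta m i)).
Qed.

Lemma A2_0 (K : comNzRingType) (delta : K) l :
  A2 delta 0 l = bas K (Sd (dnr 1 l ++ [:: (0%N,true)]) l.+1) + bas K (Sd (dnr 0 l) l)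
     - delta *: bas K (Sd (dnr 0 l) l).
Proof. by rewrite /A2 /W2 /V2 /U2 !dnr0 !upr0 cats0 eqxx expr1. Qed.
Lemma A2_l (K : comNzRingType) (delta : K) l :
  A2 delta l 0 = bas K (Sd (dnr 0 l ++ [:: (l,true)]) l.+1) + bas K (Sd (upr 0 l) l)
     - delta ^+ (upr 0 l == [::]) *: bas K (Dg [::] (lp (upr 0 l)) l).
Proof. by rewrite /A2 /W2 /V2 /U2 !dnr0 !addn0. Qed.

Definition Ctxs2 (K : comNzRingType) (delta : K) (f : mor K) l : mor K :=
  mcomp delta (bas K (Dts2 (dnr 0 l) l)) (mcomp delta (mtens 1 1 f (bas K IId)) (bas K Dbs2)).
Lemma wf_ts2 l : wf 3 1 (Dts2 (dnr 0 l) l).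
Proof. by apply: wfP => //=; rewrite !cats0 fst_dnr perm_rev. Qed.
Lemma wf_bs2 : wf 1 3 Dbs2. Proof. by []. Qed.
Lemma I_ctxs2 (K : comNzRingType) (delta : K) f l :
  rel_ideal delta 1 1 f -> rel_ideal delta 1 1 (Ctxs2 delta f l).
Proof.
move=> h; apply: RI_compl (wf_ts2 l); apply: RI_compr wf_bs2.
exact: (RI_tens h wfB_IId).
Qed.
Lemma Ctxs2E (K : comNzRingType) (delta : K) s l :
  Ctxs2 delta (bas K (Sd [:: (0%N,s)] 1)) l = bas K (Sd (dnr 1 l ++ [:: (0%N,s)]) l.+1).
Proof. by rewrite /Ctxs2 mtens_bas mcomp3 (scale_pair delta (LS2 _ _ _)) expr0 scale1r shiftl_dnr. Qed.
Lemma Hs2 (K : comNzRingType) (delta : K) l :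
  rel_ideal delta 1 1 (bas K (Sd (dnr 1 l ++ [:: (0%N,false)]) l.+1) + bas K (Sd (dnr 1 l ++ [:: (0%N,true)]) l.+1)).
Proof.
have h := I_ctxs2 l (RI_skew delta).
by rewrite skewE /Ctxs2 mtensDl mcompDl mcompDr -!/(Ctxs2 _ _ _) !Ctxs2E in h.
Qed.

Lemma TE (K : comNzRingType) (delta : K) l : transp delta (Hpow delta l) = bas K (Sd (dnr 0 l) l).
Proof. by rewrite HpowE transpE flipl_upr. Qed.
Lemma PhiR (K : comNzRingType) (delta : K) l :
  mcomp delta (bas K (Sd (dnr 0 l) l)) (Phi delta) =
  (1 - delta) *: bas K (Sd (dnr 0 l) l) - bas K (Sd ((0%N,true) :: dnr 1 l) l.+1).
Proof. by rewrite /Phi mcompBr mcompZr Im1E HmE !mcompSd shiftl0 shiftl_dnr cat0s cat1s. Qed.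
Lemma PhiL (K : comNzRingType) (delta : K) l :
  mcomp delta (Phi delta) (bas K (Sd (dnr 0 l) l)) =
  (1 - delta) *: bas K (Sd (dnr 0 l) l) - bas K (Sd (dnr 0 l ++ [:: (l,true)]) l.+1).
Proof.
rewrite /Phi mcompBl mcompZl Im1E HmE !mcompSd.
rewrite (_ : shiftl l [::] = [::]) // (_ : shiftl l [:: (0%N,true)] = [:: (l,true)]) //.
by rewrite cats0 addn0 addn1.
Qed.

Lemma rel2 (K : comNzRingType) (delta : K) l :
  ABeq delta 1 1 (transp delta (Hpow delta l.+1) - mcomp delta (Phi delta) (transp delta (Hpow delta l))
          - Gl delta l) 0.
Proof.
rewrite /ABeq subr0 /Gl !TE PhiL ZIE HpowE dnr_rcons.
have ht := tele l (step2 delta).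
apply: (I_eq (I_sub (Hs2 delta l) ht)).
rewrite A2_0 A2_l; zsolve.
Qed.

Lemma HT_comm (K : comNzRingType) (delta : K) l :
  rel_ideal delta 1 1 (bas K (Sd ((0%N,true) :: dnr 1 l) l.+1) - bas K (Sd (dnr 0 l ++ [:: (l,true)]) l.+1)).
Proof.
have h1 := rel1 delta l; have h2 := rel2 delta l.
rewrite /ABeq !subr0 in h1 h2.
apply: (I_eq (I_sub h1 h2)).
rewrite !(TE delta) PhiR PhiL; zsolve.
Qed.

Lemma comm_gen (K : comNzRingType) (delta : K) k l :
  rel_ideal delta 1 1 (bas K (Sd (dnr 0 l ++ upr l k) (l + k)) - bas K (Sd (upr 0 k ++ dnr k l) (k + l))).
Proof.
elim: k => [|k IH].
  by rewrite upr0 cats0 addn0 subrr; apply: I_zero.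
have a := RI_compl IH wf_Hd.
have b := RI_compr (HT_comm delta l) (wf_Sd_upr k).
have e1 : mcomp delta (bas K Hd) (bas K (Sd (dnr 0 l ++ upr l k) (l + k))) =
          bas K (Sd (dnr 0 l ++ upr l k.+1) (l + k.+1)).
  rewrite mcompSd upr_rcons -catA addn1 addnS.
  by [].
have e2 : mcomp delta (bas K Hd) (bas K (Sd (upr 0 k ++ dnr k l) (k + l))) =
          bas K (Sd (upr 0 k ++ dnr k l ++ [:: (k + l, true)]) (k + l).+1).
  rewrite mcompSd -catA addn1.
  by [].
have e3 : mcomp delta (bas K (Sd ((0%N,true) :: dnr 1 l) l.+1)) (bas K (Sd (upr 0 k) k)) =
          bas K (Sd (upr 0 k.+1 ++ dnr k.+1 l) (k.+1 + l)).
  rewrite mcompSd -cat1s shiftl_cat shiftl_dnr add1n upr_rcons -catA addnS.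
  by [].
have e4 : mcomp delta (bas K (Sd (dnr 0 l ++ [:: (l,true)]) l.+1)) (bas K (Sd (upr 0 k) k)) =
          bas K (Sd (upr 0 k ++ dnr k l ++ [:: (k + l, true)]) (k + l).+1).
  rewrite mcompSd shiftl_cat shiftl_dnr add0n addnS.
  by rewrite (_ : shiftl k [:: (l, true)] = [:: (k + l, true)]%N) // /shiftl /= addnC.
rewrite mcompBr e1 e2 in a.
rewrite mcompBl e3 e4 in b.
apply: (I_eq (I_sub a b)); zsolve.
Qed.

Theorem lemma2p16 (K : comNzRingType) (delta : K) :
  (forall l : nat,
     ABeq delta 1 1
       (transp delta (Hpow delta l.+1) - mcomp delta (transp delta (Hpow delta l)) (Phi delta)
          - Gl delta l) 0
  /\ ABeq delta 1 1
       (transp delta (Hpow delta l.+1) - mcomp delta (Phi delta) (transp delta (Hpow delta l))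
          - Gl delta l) 0)
  /\ (forall k l : nat,
        ABeq delta 1 1 (mcomp delta (Hpow delta k) (transp delta (Hpow delta l)))
                       (mcomp delta (transp delta (Hpow delta l)) (Hpow delta k))).
Proof.
split; first by move=> l; split; [exact: rel1 | exact: rel2].
move=> k l; rewrite /ABeq (TE delta) HpowE !mcompSd shiftl_upr shiftl_dnr !add0n.
exact: comm_gen.
Qed.
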